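(* Let $t\geq 2$, let $q$ be a prime power and $d\in F_q$. Suppose there is a $2t\times 2t$ matrix $E=(E_1,E_2)$ over $F_q$, with $E_1,E_2$ of size $2t\times t$, such that (1) $E_1$, $E_2$, $E_1+E_2$, $E_1-E_2$ all belong to $M^{(t)}_{2t\times t}(F_q)$, and (2) the $2t\times 2t$ matrices $E$, $(E_1,E_1+dE_2)$, $(E_2,E_1+dE_2)$, $(E_1+E_2,E_1+dE_2)$, $(E_1-E_2,E_1+dE_2)$ are all nonsingular. Then there exists a $q^t$-CMS$(q^t,t)$.
   Context: $M^{(t)}_{k\times s}(F_q)$ denotes the set of $k\times s$ matrices over the finite field $F_q$ in which any $t$ rows are linearly independent. An MS$(n,t)$ is an $n\times n$ matrix with entries $0,\dots,n^2-1$ such that for each $e=1,\dots,t$ the entrywise $e$-th power has all row sums, column sums, main-diagonal sum and back-diagonal sum (entries $(i,n-1-i)$) equal. With $S_e(n)=\frac1n\sum_{k=0}^{n^2-1}k^e$, a family $\{B_0,\dots,B_{m-1}\}$ of MS$(n,t)$s, $B_s=(b^{(s)}_{i,j})$, $i,j\in\{0,\dots,n-1\}$, is an $m$-CMS$(n,t)$ if $\sum_{s}\sum_{j}(b^{(s)}_{i,j})^{t+1}=mS_{t+1}(n)$ for every $i$, $\sum_{s}\sum_{i}(b^{(s)}_{i,j})^{t+1}=mS_{t+1}(n)$ for every $j$, and $\sum_s\sum_i(b^{(s)}_{i,i})^{t+1}=\sum_s\sum_i(b^{(s)}_{i,n-1-i})^{t+1}=mS_{t+1}(n)$. *)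

(* Defs.v *)
From HB Require Import structures.
From mathcomp Require Import all_boot all_order all_algebra all_field.
Set Implicit Arguments. Unset Strict Implicit. Unset Printing Implicit Defensive.
Import Order.TTheory GRing.Theory Num.Theory.

(* M^{(t)}_{k x s}(F): every t (distinct) rows are linearly independent. *)
Definition any_rows_indep (F : fieldType) (k s t : nat) (A : 'M[F]_(k, s)) : Prop :=
  forall f : 'I_t -> 'I_k, injective f -> row_free (rowsub f A).

Definition row_pow_sum n (A : 'M[nat]_n) e (i : 'I_n) : nat := \sum_(j < n) (A i j) ^ e.
Definition col_pow_sum n (A : 'M[nat]_n) e (j : 'I_n) : nat := \sum_(i < n) (A i j) ^ e.
Definition diag_pow_sum n (A : 'M[nat]_n) e : nat := \sum_(i < n) (A i i) ^ e.
Definition adiag_pow_sum n (A : 'M[nat]_n) e : nat := \sum_(i < n) (A i (rev_ord i)) ^ e.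

Definition is_MS (n t : nat) (A : 'M[nat]_n) : Prop :=
  (forall i j, A i j < n ^ 2)%N /\
  (forall i j i' j', A i j = A i' j' -> i = i' /\ j = j') /\
  (forall e, (1 <= e <= t)%N ->
     exists c : nat,
       (forall i, row_pow_sum A e i = c) /\
       (forall j, col_pow_sum A e j = c) /\
       diag_pow_sum A e = c /\ adiag_pow_sum A e = c).

Local Open Scope ring_scope.

Definition S_e (e n : nat) : rat :=
  (\sum_(k < n ^ 2) (k ^ e)%N)%:R / n%:R.

Definition is_CMS (m n t : nat) (B : 'I_m -> 'M[nat]_n) : Prop :=
  (forall s, is_MS t (B s)) /\
  (forall i : 'I_n,
     ((\sum_(s < m) row_pow_sum (B s) t.+1 i)%N)%:R = m%:R * S_e t.+1 n :> rat) /\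
  (forall j : 'I_n,
     ((\sum_(s < m) col_pow_sum (B s) t.+1 j)%N)%:R = m%:R * S_e t.+1 n :> rat) /\
  ((\sum_(s < m) diag_pow_sum (B s) t.+1)%N)%:R = m%:R * S_e t.+1 n :> rat /\
  ((\sum_(s < m) adiag_pow_sum (B s) t.+1)%N)%:R = m%:R * S_e t.+1 n :> rat.

(* Main.v *)
Require Import Defs.
From HB Require Import structures.
From mathcomp Require Import all_boot all_order all_algebra all_field.
From mathcomp Require Import zify.
Set Implicit Arguments. Unset Strict Implicit. Unset Printing Implicit Defensive.
Import GRing.Theory Num.Theory.
Lemma inv_enum (T : finType) (x0 : T) (tau : T -> T) (n : nat) :
  involutive tau -> (forall x y, tau x = x -> tau y = y -> x = y) -> #|T| = n ->
  exists alpha : 'I_n -> T, bijective alpha /\ forall i, alpha (rev_ord i) = tau (alpha i).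
Proof.
move=> invt fix1 cardT.
have tinj : injective tau := inv_inj invt.
pose R := [set x | (enum_rank x < enum_rank (tau x))%N].
pose Fx := [set x | tau x == x].
pose s := enum R ++ enum Fx ++ rev (map tau (enum R)).
have hFx : rev (enum Fx) = enum Fx /\ map tau (enum Fx) = enum Fx.
  have : (size (enum Fx) <= 1)%N.
    rewrite -cardE; apply/card_le1P => x; rewrite !inE => /eqP hx y.
    rewrite !inE; apply/eqP/eqP => [hy|->//]; exact: fix1.
  have hm : map tau (enum Fx) = enum Fx.
    rewrite -[RHS]map_id; apply/eq_in_map => x; rewrite mem_enum inE.
    by move/eqP.
  by case: (enum Fx) hm => [|a [|b l]] //.
have revs : rev s = map tau s.
  rewrite /s !rev_cat revK !map_cat map_rev -map_comp (eq_map invt) map_id.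
  by case: hFx => -> ->; rewrite catA.
have notR x : x \in R -> tau x \notin R.
  rewrite !inE invt => h; rewrite -leqNgt; exact: ltnW.
have uns : uniq s.
  rewrite /s !cat_uniq enum_uniq rev_uniq (map_inj_uniq tinj) enum_uniq /=.
  rewrite enum_uniq andbT; apply/andP; split.
    apply/hasPn => x; rewrite mem_cat mem_rev => /orP [].
      rewrite !mem_enum !inE => /eqP hx; by rewrite hx ltnn.
    by case/mapP => y; rewrite mem_enum => /notR h ->; rewrite mem_enum.
  apply/hasPn => x; rewrite mem_rev; case/mapP => y; rewrite mem_enum => yR ->.
  rewrite mem_enum !inE invt; apply/negP => /eqP e.
  by move: yR; rewrite inE -e ltnn.
have alls x : x \in s.
  rewrite /s !mem_cat mem_rev !mem_enum; apply/or3P.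
  have [e|ne] := eqVneq (tau x) x.
    by apply: Or32; rewrite inE; apply/eqP.
  have : enum_rank x != enum_rank (tau x).
    by apply: contra ne => /eqP /enum_rank_inj e; rewrite -e.
  rewrite neq_ltn => /orP [h|h]; first by apply: Or31; rewrite inE.
  apply: Or33.
  by apply/mapP; exists (tau x); rewrite ?invt // mem_enum inE invt.
have sz : size s = n.
  rewrite -cardT -(card_uniqP uns); apply: eq_card => x; by rewrite alls.
pose alpha (i : 'I_n) := nth x0 s i.
have ainj : injective alpha.
  move=> i j; rewrite /alpha => /eqP; rewrite nth_uniq ?sz //.
  by move/eqP/val_inj.
exists alpha; split.
  by apply: inj_card_bij => //; rewrite card_ord cardT.
move=> i; rewrite /alpha /=.
have hi : (i < size s)%N by rewrite sz.
have -> : (n - i.+1)%N = (size s - i.+1)%N by rewrite sz.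
by rewrite -nth_rev // revs (nth_map x0).
Qed.
Lemma digits_lt (q m : nat) (a : nat -> nat) : (forall k, a k < q) ->
  \sum_(k < m) a k * q ^ k < q ^ m.
Proof.
move=> ha; elim: m => [|m IH]; first by rewrite big_ord0.
rewrite big_ord_recr /= expnS.
have := ha m; move: IH; set X := \sum_(_ < _) _; set Q := q ^ m => h1 h2.
nia.
Qed.

Lemma digits_inj (q m : nat) (a b : nat -> nat) : (forall k, a k < q) -> (forall k, b k < q) ->
  \sum_(k < m) a k * q ^ k = \sum_(k < m) b k * q ^ k -> forall k, k < m -> a k = b k.
Proof.
move=> ha hb; elim: m => [|m IH] //.
rewrite !big_ord_recr /= => e.
have la := digits_lt m ha; have lb := digits_lt m hb.
have qm : 0 < q ^ m by case: (q ^ m) la.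
have em : a m = b m.
  have := congr1 (fun x => x %/ q ^ m) e => /=.
  by rewrite ![_ + _ * _]addnC !divnMDl // !divn_small // !addn0.
have ex : \sum_(k < m) a k * q ^ k = \sum_(k < m) b k * q ^ k.
  by move: e; rewrite em => /addIn.
move=> k; rewrite ltnS leq_eqVlt => /orP [/eqP ->//|]; exact: IH.
Qed.
Local Open Scope ring_scope.
Lemma card_cV (F : finType) m : #|{: 'cV[F]_m}| = (#|F| ^ m)%N.
Proof. by rewrite card_mx muln1. Qed.

Lemma GL (F : finFieldType) (t : nat) (M : 'M[F]_(t + t, t)) (f : 'I_t -> 'I_(t + t))
  (g : 'cV[F]_(t + t) -> nat) :
  rowsub f M \in unitmx ->
  (forall v w, rowsub f v = rowsub f w -> g v = g w) ->
  forall c : 'cV[F]_(t + t), (#|F| ^ t * \sum_(y : 'cV[F]_t) g (c + M *m y)%R = \sum_(v : 'cV[F]_(t + t)) g v)%N.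
Proof.
move=> Pu dep.
pose S c := (\sum_(y : 'cV[F]_t) g (c + M *m y)%R)%N.
have Sc : forall c1 c2, S c1 = S c2.
  move=> c1 c2.
  pose dl := invmx (rowsub f M) *m rowsub f (c2 - c1).
  rewrite /S (reindex_inj (addIr dl)) /=; apply: eq_bigr => y _; apply: dep.
  rewrite [LHS]rowsubE [RHS]rowsubE !mulmxDr.
  rewrite [rowsub f 1%:M *m (M *m dl)]mulmxA -(rowsubE f M) /dl (mulKVmx Pu) (rowsubE f (c2 - c1)) mulmxBr.
  by rewrite addrCA [X in _ + X]addrC subrK addrC.
have e1 : (\sum_(c : 'cV[F]_(t + t)) S c = #|F| ^ (t + t) * S 0%R)%N.
  rewrite (eq_bigr (fun _ => S 0%R)) ?sum_nat_const; last by move=> c _; apply: Sc.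
  by rewrite cardE -cardT card_cV.
have e2 : (\sum_(c : 'cV[F]_(t + t)) S c = #|F| ^ t * \sum_v g v)%N.
  rewrite /S exchange_big /=.
  rewrite (eq_bigr (fun _ => \sum_v g v)); last first.
    move=> y _; rewrite [RHS](reindex_inj (addIr (M *m y))) //.
  by rewrite sum_nat_const cardE -cardT card_cV.
move=> c; rewrite -/(S c) (Sc c 0%R).
have qt : (0 < #|F| ^ t)%N by rewrite expn_gt0; apply/orP; left; apply/card_gt0P; exists 0.
apply/eqP; rewrite -(eqn_pmul2l qt) mulnA -expnD -e1 e2 //.
Qed.
Lemma extend_inj (t e : nat) (h : 'I_e -> 'I_(t + t)) : (e <= t)%N ->
  exists f : 'I_t -> 'I_(t + t), injective f /\ forall j, exists i, h j = f i.
Proof.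
move=> et.
pose A := [set h j | j in 'I_e].
have cA : (#|A| <= t)%N by apply: leq_trans et; rewrite -[X in (_ <= X)%N]card_ord leq_imset_card.
have : (t - #|A| <= #|~: A|)%N.
  by have := cardsC A; rewrite card_ord; lia.
case/card_geqP => s [us ss subs].
pose S := enum A ++ s.
have szS : size S = t by rewrite size_cat ss -cardE; lia.
have uS : uniq S.
  rewrite cat_uniq enum_uniq us andbT /=; apply/hasPn => x /subs.
  by rewrite mem_enum inE.
pose f (i : 'I_t) := nth (lshift t i) S i.
exists f; split.
  move=> i j; rewrite /f (set_nth_default (lshift t j) (lshift t i)) ?szS //.
  by move/eqP; rewrite nth_uniq ?szS // => /eqP/val_inj.
move=> j.
have hj : h j \in S by rewrite mem_cat mem_enum imset_f.
have ij : (index (h j) S < t)%N by rewrite -[X in (_ < X)%N]szS index_mem.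
exists (Ordinal ij); rewrite /f /= nth_index //.
Qed.

Definition sig (F : finType) (a : F) : nat := enum_rank a.
Definition dig (F : finFieldType) m (v : 'cV[F]_m) (k : nat) : nat :=
  if insub k is Some k' then sig (v k' ord0) else 0%N.
Definition phi (F : finFieldType) m (v : 'cV[F]_m) : nat := (\sum_(k < m) dig v k * #|F| ^ k)%N.

Lemma qpos (F : finFieldType) : (0 < #|F|)%N.
Proof. by apply/card_gt0P; exists 0. Qed.

Lemma dig_lt (F : finFieldType) m (v : 'cV[F]_m) k : (dig v k < #|F|)%N.
Proof. rewrite /dig; case: insub => [k'|]; [exact: ltn_ord | exact: qpos]. Qed.

Lemma dig_ord (F : finFieldType) m (v : 'cV[F]_m) (k : 'I_m) : dig v k = sig (v k ord0).
Proof. by rewrite /dig valK. Qed.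

Lemma phi_lt (F : finFieldType) m (v : 'cV[F]_m) : (phi v < #|F| ^ m)%N.
Proof. exact: digits_lt (dig_lt v). Qed.

Lemma phi_inj (F : finFieldType) m : injective (@phi F m).
Proof.
move=> v w e; have := digits_inj (dig_lt v) (dig_lt w) e => h.
apply/matrixP => i j; rewrite [j]ord1.
have := h i (ltn_ord i); rewrite !dig_ord /sig => /val_inj; exact: enum_rank_inj.
Qed.

Lemma phi_pow (F : finFieldType) m (v : 'cV[F]_m) e :
  (phi v ^ e = \sum_(h : {ffun 'I_e -> 'I_m}) \prod_(j < e) (sig (v (h j) ord0) * #|F| ^ (h j)))%N.
Proof.
rewrite -[in LHS](card_ord e) -prod_nat_const /phi.
rewrite (eq_bigr (fun _ => \sum_(k < m) sig (v k ord0) * #|F| ^ k)%N); last first.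
  by move=> j _; apply: eq_bigr => k _; rewrite dig_ord.
exact: bigA_distr_bigA.
Qed.

Lemma KL (F : finFieldType) (t e : nat) (M : 'M[F]_(t + t, t)) :
  any_rows_indep t M -> (e <= t)%N -> forall c : 'cV[F]_(t + t),
  (#|F| ^ t * \sum_(y : 'cV[F]_t) phi (c + M *m y)%R ^ e = \sum_(v : 'cV[F]_(t + t)) phi v ^ e)%N.
Proof.
move=> Mi et c.
rewrite (eq_bigr _ (fun y _ => phi_pow _ _)) [RHS](eq_bigr _ (fun y _ => phi_pow _ _)).
rewrite exchange_big big_distrr [RHS]exchange_big /=; apply: eq_bigr => h _.
have [f [finj hf]] := extend_inj h et.
apply: (GL (f := f)); first by rewrite -row_free_unit; exact: Mi.
move=> v w evw; apply: eq_bigr => j _.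
case: (hf j) => i ->; congr (sig _ * _)%N.
by have := congr1 (fun A : 'M[F]_(t, 1) => A i ord0) evw; rewrite !mxE.
Qed.

Lemma KL2 (F : finFieldType) (t : nat) (M N : 'M[F]_(t + t, t)) (g : 'cV[F]_(t + t) -> nat) :
  row_mx M N \in unitmx -> forall c : 'cV[F]_(t + t),
  (\sum_(z : 'cV[F]_t) \sum_(y : 'cV[F]_t) g (c + M *m y + N *m z)%R = \sum_(v : 'cV[F]_(t + t)) g v)%N.
Proof.
move=> Pu c.
rewrite exchange_big pair_big /=.
rewrite (reindex (fun w : 'cV[F]_(t + t) => (usubmx w, dsubmx w))) /=; last first.
  apply: onW_bij; exists (fun p => col_mx p.1 p.2) => [w|[a b]] /=.
    by rewrite vsubmxK.
  by rewrite col_mxKu col_mxKd.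
rewrite (eq_bigr (fun w => g (c + row_mx M N *m w))); last first.
  by move=> w _; rewrite -{3}(vsubmxK w) mul_row_col addrA.
rewrite [RHS](reindex_inj (h := fun w => c + row_mx M N *m w)) //.
move=> w1 w2 /addrI e; rewrite -(mulKmx Pu w1) e mulKmx //.
Qed.

Lemma sum_bij (T : finType) n (a : 'I_n -> T) (G : T -> nat) : bijective a ->
  (\sum_(j < n) G (a j) = \sum_y G y)%N.
Proof. by move=> b; rewrite [RHS](reindex a) //; exact: onW_bij. Qed.

Lemma dbl (T : finType) n (a : 'I_n -> T) (G : T -> T -> nat) : bijective a ->
  (\sum_(s < n) \sum_(j < n) G (a s) (a j) = \sum_z \sum_y G z y)%N.
Proof.
move=> b; rewrite (eq_bigr (fun s => \sum_y G (a s) y)); last by move=> s _; exact: sum_bij.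
exact: (sum_bij (fun z => \sum_y G z y)%N).
Qed.

Lemma phi_sum (F : finFieldType) t e :
  (\sum_(v : 'cV[F]_(t + t)) phi v ^ e = \sum_(k < (#|F| ^ t) ^ 2) k ^ e)%N.
Proof.
have lt (v : 'cV[F]_(t + t)) : (phi v < (#|F| ^ t) ^ 2)%N.
  rewrite -expnM muln2 -addnn. exact: phi_lt.
pose p v : 'I_((#|F| ^ t) ^ 2) := Ordinal (lt v).
have pb : bijective p.
  apply: inj_card_bij; first by move=> v w /(congr1 val) /= /phi_inj.
  by rewrite card_ord card_cV -expnM muln2 -addnn.
by rewrite [RHS](reindex p) //; exact: onW_bij.
Qed.

Lemma Se_eq n e : (0 < n)%N -> n%:R * S_e e n = ((\sum_(k < n ^ 2) k ^ e)%N)%:R :> rat.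
Proof.
move=> n0; rewrite /S_e mulrC divfK //; last by rewrite pnatr_eq0 -lt0n.
Qed.

Theorem lemma3p3 (F : finFieldType) (t : nat) (d : F)
  (E1 E2 : 'M[F]_(t + t, t)) :
  (2 <= t)%N ->
  any_rows_indep t E1 -> any_rows_indep t E2 ->
  any_rows_indep t (E1 + E2) -> any_rows_indep t (E1 - E2) ->
  row_mx E1 E2 \in unitmx ->
  row_mx E1 (E1 + d *: E2) \in unitmx ->
  row_mx E2 (E1 + d *: E2) \in unitmx ->
  row_mx (E1 + E2) (E1 + d *: E2) \in unitmx ->
  row_mx (E1 - E2) (E1 + d *: E2) \in unitmx ->
  exists B : 'I_(#|F| ^ t) -> 'M[nat]_(#|F| ^ t),
    is_CMS t B.
Proof.
move=> t2 i1 i2 i3 i4 u12 u13 u23 u3p u3m.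
set E3 := E1 + d *: E2.
have t0 : (0 < t)%N by apply: leq_trans t2.
have n0 : (0 < #|F| ^ t)%N by rewrite expn_gt0 qpos.
pose cc : 'cV[F]_t := const_mx 1.
have [alpha [abij arev]] : exists alpha : 'I_(#|F| ^ t) -> 'cV[F]_t,
    bijective alpha /\ forall i, alpha (rev_ord i) = cc - alpha i.
  apply: (inv_enum 0 (tau := fun x => cc - x)); last by rewrite card_cV.
    by move=> x; rewrite opprB addrC subrK.
  move=> x y hx hy.
  have hx' : cc = x *+ 2 by rewrite mulr2n; apply/eqP; rewrite -subr_eq; apply/eqP.
  have hy' : cc = y *+ 2 by rewrite mulr2n; apply/eqP; rewrite -subr_eq; apply/eqP.
  have [two0|two0] := eqVneq (2%:R : F) 0.
    have : cc (Ordinal t0) ord0 = 0.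
      by rewrite hx' -scaler_nat two0 scale0r mxE.
    by rewrite mxE => /eqP; rewrite oner_eq0.
  apply: (scalerI two0); rewrite !scaler_nat -hx' -hy' //.
pose B (s : 'I_(#|F| ^ t)) : 'M[nat]_(#|F| ^ t) :=
  \matrix_(i, j) phi (E1 *m alpha i + E2 *m alpha j + E3 *m alpha s).
have ainj : injective alpha := bij_inj abij.
have KLc (M : 'M[F]_(t + t, t)) e (c : 'cV[F]_(t + t)) : any_rows_indep t M -> (e <= t)%N ->
    (\sum_(y : 'cV[F]_t) phi (c + M *m y) ^ e = (\sum_(v : 'cV[F]_(t + t)) phi v ^ e) %/ #|F| ^ t)%N.
  by move=> Mi et; rewrite -(KL Mi et c) mulKn.
exists B; split.
  move=> s; split; first by move=> i j; rewrite mxE -expnM muln2 -addnn; exact: phi_lt.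
  split.
    move=> i j i' j'; rewrite !mxE => /phi_inj /addIr.
    rewrite -!mul_row_col => /(congr1 (mulmx (invmx (row_mx E1 E2)))).
    by rewrite !(mulKmx u12) => /eq_col_mx [/ainj -> /ainj ->].
  move=> e /andP [_ et].
  exists ((\sum_(v : 'cV[F]_(t + t)) phi v ^ e) %/ #|F| ^ t)%N; split; last split; last split.
  - move=> i; rewrite /row_pow_sum.
    pose G := fun y => expn (phi ((E1 *m alpha i + E3 *m alpha s) + E2 *m y)) e.
      rewrite (eq_bigr (fun j => G (alpha j))); last first.
      by move=> j _; rewrite mxE /G addrAC.
    by rewrite sum_bij // /G KLc.
  - move=> j; rewrite /col_pow_sum.
    pose G := fun y => expn (phi ((E2 *m alpha j + E3 *m alpha s) + E1 *m y)) e.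
      rewrite (eq_bigr (fun i => G (alpha i))); last first.
      by move=> i _; rewrite mxE /G -addrA addrC.
    by rewrite sum_bij // /G KLc.
  - rewrite /diag_pow_sum.
    pose G := fun y => expn (phi (E3 *m alpha s + (E1 + E2) *m y)) e.
      rewrite (eq_bigr (fun i => G (alpha i))); last first.
      by move=> i _; rewrite mxE /G; congr (expn (phi _) _); rewrite (mulmxDl E1 E2) [RHS]addrC.
    by rewrite sum_bij // /G KLc.
  - rewrite /adiag_pow_sum.
    pose G := fun y => expn (phi ((E2 *m cc + E3 *m alpha s) + (E1 - E2) *m y)) e.
      rewrite (eq_bigr (fun i => G (alpha i))); last first.
      by move=> i _; rewrite mxE /G arev; congr (expn (phi _) _); rewrite mulmxBr (mulmxBl E1 E2) [E1 *m _ + _]addrCA addrAC.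
    by rewrite sum_bij // /G KLc.
split.
  move=> i; rewrite Se_eq // /row_pow_sum; congr (_ %:R).
  pose G := fun z y => expn (phi (E1 *m alpha i + E2 *m y + E3 *m z)) t.+1.
  rewrite (eq_bigr (fun s => \sum_(j < #|F| ^ t) G (alpha s) (alpha j))); last first.
    by move=> s _; apply: eq_bigr => j _; rewrite mxE /G.
  by rewrite (dbl _ abij) /G /= (@KL2 _ _ _ _ (fun v => expn (phi v) t.+1) u23) phi_sum.
split.
  move=> j; rewrite Se_eq // /col_pow_sum; congr (_ %:R).
  pose G := fun z y => expn (phi (E2 *m alpha j + E1 *m y + E3 *m z)) t.+1.
  rewrite (eq_bigr (fun s => \sum_(i < #|F| ^ t) G (alpha s) (alpha i))); last first.
    by move=> s _; apply: eq_bigr => i _; rewrite mxE /G [E1 *m _ + _]addrC.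
  by rewrite (dbl _ abij) /G /= (@KL2 _ _ _ _ (fun v => expn (phi v) t.+1) u13) phi_sum.
split.
  rewrite Se_eq // /diag_pow_sum; congr (_ %:R).
  pose G := fun z y => expn (phi (0 + (E1 + E2) *m y + E3 *m z)) t.+1.
  rewrite (eq_bigr (fun s => \sum_(i < #|F| ^ t) G (alpha s) (alpha i))); last first.
    by move=> s _; apply: eq_bigr => i _; rewrite mxE /G add0r (mulmxDl E1 E2).
  by rewrite (dbl _ abij) /G /= (@KL2 _ _ _ _ (fun v => expn (phi v) t.+1) u3p) phi_sum.
rewrite Se_eq // /adiag_pow_sum; congr (_ %:R).
pose G := fun z y => expn (phi (E2 *m cc + (E1 - E2) *m y + E3 *m z)) t.+1.
rewrite (eq_bigr (fun s => \sum_(i < #|F| ^ t) G (alpha s) (alpha i))); last first.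
  by move=> s _; apply: eq_bigr => i _; rewrite mxE /G arev; congr (expn (phi _) _); rewrite mulmxBr (mulmxBl E1 E2) [E1 *m _ + _]addrCA.
by rewrite (dbl _ abij) /G /= (@KL2 _ _ _ _ (fun v => expn (phi v) t.+1) u3m) phi_sum.
Qed.
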